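(* Assume (F1) and (H1). Then every solution $(c,\varphi)$ of the travelling wave problem satisfies $0<\varphi(\xi)<K$ for all $\xi\in\mathbb{R}$.
   Context: Fix constants $d>0$, $\tau\geq0$, $K>0$, $f:[0,K]^2\to\mathbb{R}$ and $h:\mathbb{R}\to\mathbb{R}$ (partial derivatives of $f$ assumed to exist). (F1) $f\in C([0,K]^2,\mathbb{R})$, $f(0,0)=f(K,K)=0$, $f(u,u)>0$ for $u\in(0,K)$, $\partial_2f(u,v)\geq0$ on $[0,K]^2$. (H1) $h\ge0$, even, integrable, $\int_{\mathbb{R}}h=1$. Notation: $\Delta_1\varphi(\xi)=\varphi(\xi+1)-2\varphi(\xi)+\varphi(\xi-1)$, $(h*\varphi)(\xi)=\int_{\mathbb{R}}h(y)\varphi(\xi-y)dy$. A solution $(c,\varphi)$ of the travelling wave problem consists of $c>0$ and a differentiable $\varphi:\mathbb{R}\to\mathbb{R}$ with $-c\varphi'(\xi)+d\Delta_1\varphi(\xi)+f(\varphi(\xi),(h*\varphi)(\xi-c\tau))=0$ for all $\xi$, $\lim_{\xi\to-\infty}\varphi(\xi)=0$, $\lim_{\xi\to\infty}\varphi(\xi)=K$, and $0\le\varphi\le K$ on $\mathbb{R}$. *)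

(* Defs.v *)
From HB Require Import structures.
From mathcomp Require Import all_boot all_order all_algebra.
From mathcomp Require Import all_classical all_reals all_analysis.
Set Implicit Arguments. Unset Strict Implicit. Unset Printing Implicit Defensive.
Import Order.TTheory GRing.Theory Num.Theory.
Import numFieldNormedType.Exports.
Local Open Scope classical_set_scope.
Local Open Scope ring_scope.

Definition conv {R : realType} (h phi : R -> R) (xi : R) : R :=
  fine (\int[lebesgue_measure]_(y in [set: R]) (h y * phi (xi - y))%:E)%E.

Definition Delta1 {R : realType} (phi : R -> R) (xi : R) : R :=
  phi (xi + 1) - 2 * phi xi + phi (xi - 1).

Definition F1 {R : realType} (K : R) (f : R -> R -> R) : Prop :=
  {within [set p : R * R | 0 <= p.1 <= K /\ 0 <= p.2 <= K],
     continuous (fun p : R * R => f p.1 p.2)} /\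
  f 0 0 = 0 /\ f K K = 0 /\
  (forall u, 0 < u < K -> 0 < f u u) /\
  (forall u v, 0 <= u <= K -> 0 < v < K ->
     derivable (f u) v 1 /\ 0 <= 'D_1 (f u) v).

Definition H1 {R : realType} (h : R -> R) : Prop :=
  (forall x, 0 <= h x) /\ (forall x, h (- x) = h x) /\
  measurable_fun [set: R] h /\
  lebesgue_measure.-integrable [set: R] (fun x => (h x)%:E) /\
  (\int[lebesgue_measure]_(x in [set: R]) (h x)%:E = 1%:E)%E.

Definition tw_solution {R : realType} (d tau K : R) (f : R -> R -> R)
    (h : R -> R) (c : R) (phi : R -> R) : Prop :=
  0 < c /\
  (forall xi, derivable phi xi 1) /\
  (forall xi, - c * 'D_1 phi xi + d * Delta1 phi xi
               + f (phi xi) (conv h phi (xi - c * tau)) = 0) /\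
  phi @ -oo --> 0 /\
  phi @ +oo --> K /\
  (forall xi, 0 <= phi xi <= K).

(* Main.v *)
Require Import Defs.
From HB Require Import structures.
From mathcomp Require Import all_boot all_order all_algebra.
From mathcomp Require Import all_classical all_reals all_analysis.
From mathcomp Require Import lra.
Import Order.TTheory GRing.Theory Num.Theory.
Import numFieldNormedType.Exports.
Local Open Scope classical_set_scope.
Local Open Scope ring_scope.

Lemma slice_cont (R : realType) (K u : R) (f : R -> R -> R) :
  {within [set p : R * R | 0 <= p.1 <= K /\ 0 <= p.2 <= K],
     continuous (fun p : R * R => f p.1 p.2)} ->
  0 <= u <= K -> {within `[0, K], continuous (f u)}.
Proof.
move=> cf hu; apply/subspace_continuousP => x /= Ix.
have Sx : (0 <= (u, x).1 <= K /\ 0 <= (u, x).2 <= K).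
  by split => //=; move: Ix; rewrite in_itv.
have := (subspace_continuousP _ _).1 cf (u, x) Sx => /= Hg.
move=> W /Hg /= [[P Q] /= [Pu Qx] PQW].
rewrite /within /=; apply: filterS Qx => v Qv Iv.
apply: (PQW (u, v)) => //=.
  split => //=; exact: nbhs_singleton.

Qed.

Lemma f_mono (R : realType) (K : R) (f : R -> R -> R) (u v w : R) :
  F1 K f -> 0 <= u <= K -> 0 <= v -> v <= w -> w <= K -> f u v <= f u w.
Proof.
move=> [cf [_ [_ [_ hd]]]] hu v0 vw wK.
apply: (@ger0_derive1_ndecr _ (f u) 0 K) => //.
- by move=> x; rewrite in_itv /= => hx; case: (hd u x hu hx).
- by move=> x; rewrite in_itv /= => hx; rewrite derive1E; case: (hd u x hu hx).
- exact: slice_cont.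
Qed.

Lemma conv_bounds (R : realType) (K : R) (h phi : R -> R) (xi : R) :
  H1 h -> continuous phi -> (forall x, 0 <= phi x <= K) ->
  0 <= Defs.conv h phi xi <= K.
Proof.
move=> [h0 [_ [mh [ih h1]]]] cphi phib.
have mg : measurable_fun [set: R] (fun y => h y * phi (xi - y)).
  apply: measurable_realfun.measurable_funM => //; apply: measurable_realfun.continuous_measurable_fun.
  move=> y; apply: continuous_comp; last exact: cphi.
  by apply: cvgB; [exact: cvg_cst | exact: cvg_id].
have g0 : forall y, (0 <= (h y * phi (xi - y))%:E)%E.
  by move=> y; rewrite lee_fin mulr_ge0 //; case/andP: (phib (xi - y)).
have I0 : (0 <= \int[lebesgue_measure]_(y in [set: R]) (h y * phi (xi - y))%:E)%E by apply: integral_ge0 => y _; exact: g0.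
have IK : (\int[lebesgue_measure]_(y in [set: R]) (h y * phi (xi - y))%:E
           <= K%:E)%E.
  apply: (@le_trans _ _ (\int[lebesgue_measure]_(y in [set: R]) ((h y)%:E * K%:E))%E).
    apply: ge0_le_integral => //.
    - by apply/measurable_realfun.measurable_EFinP; exact: mg.
    - by apply: emeasurable_funM => //; exact/measurable_realfun.measurable_EFinP.
    - move=> y _; rewrite -EFinM lee_fin ler_wpM2l //; by case/andP: (phib (xi - y)).
  rewrite (integralZr _ ih).
  rewrite [X in (X * _)%E](_ : _ = 1%E) ?mul1e //; exact: h1.
  exact: measurableT.
rewrite /Defs.conv; move: I0 IK.
case: (\int[lebesgue_measure]_(y in [set: R]) (h y * phi (xi - y))%:E)%E => //=.
by move=> r; rewrite !lee_fin => -> ->.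
Qed.

Theorem lemma3p1 (R : realType) (d tau K : R) (f : R -> R -> R) (h : R -> R)
    (hd : 0 < d) (htau : 0 <= tau) (hK : 0 < K)
    (hF1 : F1 K f) (hH1 : H1 h) (c : R) (phi : R -> R) :
  tw_solution d tau K f h c phi ->
  forall xi : R, 0 < phi xi < K.
Proof.
move=> [c0 [dphi [heq [lim0 [limK phib]]]]].
have cphi : continuous phi.
  by move=> x; apply: differentiable_continuous; apply/derivable1_diffP.
have hv x := @conv_bounds R K h phi x hH1 cphi phib.
have F1' := hF1; case: F1' => [_ [f00 [fKK _]]].
have step0 : forall x, phi x = 0 -> phi (x + 1) = 0 /\ phi (x - 1) = 0.
  move=> x px.
  have D0 : 'D_1 phi x = 0.
    have hd0 : is_derive x 1 phi 0.
      apply: (@derive1_at_min _ phi (x - 1) (x + 1) x).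
      - lra.
      - by move=> t _; exact: dphi.
      - by rewrite in_itv /=; apply/andP; split; lra.
      - by move=> t _; rewrite px; case/andP: (phib t).
    by have := @derive_val _ _ _ _ _ _ _ hd0.
  have := heq x; rewrite D0 px /Delta1.
  set v := Defs.conv h phi (x - c * tau).
  have fv : 0 <= f 0 v.
    rewrite -[X in X <= _]f00; apply: (@f_mono R K f) => //; rewrite ?lexx ?(ltW hK) //;
      by case/andP: (hv (x - c * tau)).
  case/andP: (phib (x + 1)) => a0 _; case/andP: (phib (x - 1)) => b0 _.
  set D := d * _; move=> E.
  have : D <= 0 by lra.
  rewrite /D px pmulr_rle0 // => H; split; lra.
have stepK : forall x, phi x = K -> phi (x + 1) = K /\ phi (x - 1) = K.
  move=> x px.
  have D0 : 'D_1 phi x = 0.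
    have hd0 : is_derive x 1 phi 0.
      apply: (@derive1_at_max _ phi (x - 1) (x + 1) x).
      - lra.
      - by move=> t _; exact: dphi.
      - by rewrite in_itv /=; apply/andP; split; lra.
      - by move=> t _; rewrite px; case/andP: (phib t).
    by have := @derive_val _ _ _ _ _ _ _ hd0.
  have := heq x; rewrite D0 px /Delta1.
  set v := Defs.conv h phi (x - c * tau).
  have fv : f K v <= 0.
    rewrite -[X in _ <= X]fKK; apply: (@f_mono R K f) => //; rewrite ?lexx ?(ltW hK) //;
      by case/andP: (hv (x - c * tau)).
  case/andP: (phib (x + 1)) => _ a0; case/andP: (phib (x - 1)) => _ b0.
  set D := d * _; move=> E.
  have : 0 <= D by lra.
  rewrite /D px pmulr_rge0 // => H; split; lra.
move=> xi; case/andP: (phib xi) => p0 pK.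
apply/andP; split.
- rewrite lt_def p0 andbT; apply/eqP => px.
  have all0 : forall n : nat, phi (xi + n%:R) = 0.
    elim=> [|n IH]; first by rewrite addr0.
    by rewrite -natr1 addrA; case: (step0 _ IH).
  have := @cvgr_gt R R _ _ phi K limK (K / 2); rewrite (_ : K / 2 < K); last lra.
  move=> /(_ _ isT) [M [_ HM]].
  have := all0 (Num.Def.trunc (`|M| - xi)).+1.
  have : M < xi + (Num.Def.trunc (`|M| - xi)).+1%:R.
    have := truncnS_gt (`|M| - xi); have := ler_norm M; lra.
  move=> /HM; lra.
- rewrite lt_def pK andbT; apply/eqP => px.
  have allK : forall n : nat, phi (xi - n%:R) = K.
    elim=> [|n IH]; first by rewrite subr0.
    by rewrite -natr1 opprD addrA; case: (stepK _ IH).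
  have := @cvgr_lt R R _ _ phi 0 lim0 (K / 2); rewrite (_ : 0 < K / 2); last lra.
  move=> /(_ _ isT) [M [_ HM]].
  have := allK (Num.Def.trunc (`|M| + xi)).+1.
  have : xi - (Num.Def.trunc (`|M| + xi)).+1%:R < M.
    have := truncnS_gt (`|M| + xi); have := ler_norm (- M); rewrite normrN; lra.
  move=> /HM; lra.
Qed.
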